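(* Let $H$ be an abelian group with an alternating $\mathbb{Z}$-bilinear form $\langle-,-\rangle\neq0$. Let $K:\mathbb{Q}[H]\to\mathbb{Q}\otimes_{\mathbb{Z}}H$ be the $\mathbb{Q}$-linear map with $K([x])=1\otimes x$, and $\mathfrak g_K=\ker K$ (a Lie subalgebra of $\mathbb{Q}[H]$). Then the composition \[ H_2(\mathfrak g_K)\longrightarrow H_2(\mathbb{Q}[H])\longrightarrow H_2(\mathbb{Q}[H^{(1)}]) \] is surjective, where the first map is induced by the inclusion $\mathfrak g_K\hookrightarrow\mathbb{Q}[H]$ and the second is induced by the projection $\varpi^{(1)}:\mathbb{Q}[H]=\mathbb{Q}[\ker\mu]\oplus\mathbb{Q}[H^{(1)}]\to\mathbb{Q}[H^{(1)}]$.
   Context: $\mu:H\to\mathrm{Hom}_{\mathbb{Z}}(H,\mathbb{Z})$, $\mu(x)(y)=\langle x,y\rangle$; $H^{(1)}:=H\setminus\ker\mu$. $\mathbb{Q}[S]$ ($S\subset H$) is the $\mathbb{Q}$-vector space with basis symbols $[x]$, $x\in S$ (note $c[x]\ne[cx]$); $\mathbb{Q}[H]$ is a Lie algebra via $[[x],[y]]=\langle x,y\rangle[x+y]$, $\mathbb{Q}[\ker\mu]$ is its center and $\mathbb{Q}[H^{(1)}]$ its derived subalgebra, and $\varpi^{(1)}$ is a Lie algebra homomorphism. $H_2$ denotes Lie algebra homology with trivial coefficients $\mathbb{Q}$ (Chevalley–Eilenberg complex). *)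

(* Defs.v *)
From HB Require Import structures.
From mathcomp Require Import all_boot all_order all_algebra.
Set Implicit Arguments. Unset Strict Implicit. Unset Printing Implicit Defensive.
Import GRing.Theory.
Local Open Scope ring_scope.

Section LieDefs.
Variable H : zmodType.

Definition alt_bilinear (f : H -> H -> int) : Prop :=
  [/\ (forall x y z, f (x + y) z = f x z + f y z),
      (forall x y z, f x (y + z) = f x y + f x z) &
      (forall x, f x x = 0)].

(* Elements of Q[H]: finite formal Q-linear combinations sum a_i [x_i],
   given as lists of pairs (a_i, x_i); two lists denote the same element
   iff they have the same coefficient function [coef]. *)
Definition fsum := seq (rat * H).

Definition coef (u : fsum) (z : H) : rat := \sum_(p <- u | p.2 == z) p.1.

Definition scale (r : rat) (u : fsum) : fsum := [seq (r * p.1, p.2) | p <- u].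

Definition br (f : H -> H -> int) (u v : fsum) : fsum :=
  [seq (p.1 * q.1 * (f p.2 q.2)%:~R, p.2 + q.2) | p <- u, q <- v].

(* u lies in g_K = ker K, K([x]) = 1 (x) x in Q (x)_Z H:  the tensor
   sum_i a_i (x) x_i vanishes, i.e. (universal property of the tensor
   product) every Z-bilinear map out of Q x H kills it. *)
Definition in_gK (u : fsum) : Prop :=
  forall (A : zmodType) (b : rat -> H -> A),
    (forall a a' x, b (a + a') x = b a x + b a' x) ->
    (forall a x y, b a (x + y) = b a x + b a y) ->
    \sum_(p <- u) b p.1 p.2 = 0.

Definition in_kermu (f : H -> H -> int) (z : H) : Prop := forall y, f z y = 0.

Definition in_QH1 (f : H -> H -> int) (u : fsum) : Prop :=
  forall z, in_kermu f z -> coef u z = 0.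

(* 2-chains: lists of pairs (u_i, v_i) standing for sum_i u_i /\ v_i.
   Lambda^2 of the free vector space on a basis S is identified with
   alternating finitely supported functions on S x S via the coordinate
   of [s] /\ [t]: *)
Definition w2 (c : seq (fsum * fsum)) (s t : H) : rat :=
  \sum_(p <- c) (coef p.1 s * coef p.2 t - coef p.1 t * coef p.2 s).

(* Chevalley-Eilenberg differential d(u /\ v) = -[u,v]; c is a cycle iff
   sum_i [u_i, v_i] = 0. *)
Definition is_cycle (f : H -> H -> int) (c : seq (fsum * fsum)) : Prop :=
  forall z, coef (flatten [seq br f p.1 p.2 | p <- c]) z = 0.

Definition d3 (f : H -> H -> int) (t : fsum * fsum * fsum) : seq (fsum * fsum) :=
  let: (x, y, z) := t in
  [:: (br f x y, scale (-1) z); (br f x z, y); (br f y z, scale (-1) x)].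

Definition d3s (f : H -> H -> int) (ts : seq (fsum * fsum * fsum)) :
  seq (fsum * fsum) := flatten [seq d3 f t | t <- ts].

End LieDefs.

(* Main.v *)
Require Import Defs.
From mathcomp Require Import all_boot all_order all_algebra.
From mathcomp Require Import ring lra zify.
From Stdlib Require Import ClassicalEpsilon Classical.
Import GRing.Theory.
Local Open Scope ring_scope.

Section S.
Variable H : zmodType.
Variable f : H -> H -> int.

Definition dl (z s : H) : rat := (z == s)%:R.
Definition E (u v s t : H) : rat := dl u s * dl v t - dl u t * dl v s.

Lemma coef_cons l (z : H) u w : coef ((l, z) :: u) w = l * dl z w + coef u w.
Proof. by rewrite /coef big_cons /= /dl; case: eqP => _; rewrite ?mulr1 ?mulr0 ?add0r. Qed.
Lemma coef_nil (w : H) : coef (H:=H) [::] w = 0.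
Proof. by rewrite /coef big_nil. Qed.
Lemma w2_cons p c (s t : H) : w2 (p :: c) s t =
  (coef p.1 s * coef p.2 t - coef p.1 t * coef p.2 s) + w2 c s t.
Proof. by rewrite /w2 big_cons. Qed.
Lemma w2_nil (s t : H) : w2 (H:=H) [::] s t = 0.
Proof. by rewrite /w2 big_nil. Qed.
Lemma w2_cat c1 c2 (s t : H) : w2 (c1 ++ c2) s t = w2 c1 s t + w2 c2 s t.
Proof. by rewrite /w2 big_cat. Qed.

Definition tri (l : rat) (a b c : H) : fsum H * fsum H * fsum H :=
  ([:: (l, a)], [:: (1, b)], [:: (1, c)]).
Definition D3v l a b c s t :=
  l * ( - (f a b)%:~R * E (a+b) c s t + (f a c)%:~R * E (a+c) b s t
        - (f b c)%:~R * E (b+c) a s t).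
Lemma w2_d3 l a b c s t : w2 (d3 f (tri l a b c)) s t = D3v l a b c s t.
Proof.
rewrite /d3 /tri /br /scale /= !w2_cons w2_nil /= !coef_cons !coef_nil /D3v /E.
ring.
Qed.
Lemma d3s_cons t ts : d3s f (t :: ts) = d3 f t ++ d3s f ts.
Proof. by []. Qed.
Lemma d3s_cat ts1 ts2 : d3s f (ts1 ++ ts2) = d3s f ts1 ++ d3s f ts2.
Proof. by rewrite /d3s map_cat flatten_cat. Qed.
Lemma w2_d3s_cons l a b c ts s t :
  w2 (d3s f (tri l a b c :: ts)) s t = D3v l a b c s t + w2 (d3s f ts) s t.
Proof. by rewrite d3s_cons w2_cat w2_d3. Qed.
Lemma w2_d3s_nil s t : w2 (d3s f [::]) s t = 0.
Proof. by rewrite /d3s /= w2_nil. Qed.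
Hypothesis hf : alt_bilinear f.

Lemma fDl x y z : f (x + y) z = f x z + f y z.
Proof. by case: hf. Qed.
Lemma fDr x y z : f x (y + z) = f x y + f x z.
Proof. by case: hf. Qed.
Lemma fxx x : f x x = 0.
Proof. by case: hf. Qed.
Lemma f0l y : f 0 y = 0.
Proof. by have := fDl 0 0 y; rewrite addr0 => /eqP; rewrite -subr_eq subrr eq_sym => /eqP. Qed.
Lemma f0r y : f y 0 = 0.
Proof. by have := fDr y 0 0; rewrite addr0 => /eqP; rewrite -subr_eq subrr eq_sym => /eqP. Qed.
Lemma fNl x y : f (- x) y = - f x y.
Proof. by apply/eqP; rewrite -addr_eq0 -fDl addNr f0l. Qed.
Lemma fNr x y : f y (- x) = - f y x.
Proof. by apply/eqP; rewrite -addr_eq0 -fDr addNr f0r. Qed.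
Lemma fC x y : f y x = - f x y.
Proof. by apply/eqP; rewrite -addr_eq0; have := fxx (x + y); rewrite fDl !fDr !fxx add0r addr0 addrC => ->. Qed.

Definition ev (g z s t : H) := E z (g - z) s t.

Lemma E_anti u v s t : E u v s t = - E v u s t.
Proof. rewrite /E; ring. Qed.

Lemma D3_ev l a b c g s t : a + b + c = g ->
  D3v l a b c s t = l * ((f b c)%:~R * ev g a s t + (f c a)%:~R * ev g b s t
                         + (f a b)%:~R * ev g c s t).
Proof.
move=> <-; rewrite /D3v /ev.
have -> : a + b + c - c = a + b by rewrite addrK.
have -> : a + b + c - b = a + c by rewrite addrAC addrK.
have -> : a + b + c - a = b + c by rewrite -(addrA a b c) (addrC a) addrK.
rewrite (E_anti (a+b)) (E_anti (a+c)) (E_anti (b+c)) (fC a c) intrN; ring.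
Qed.

Lemma ev_gB g w s t : ev g (g - w) s t = - ev g w s t.
Proof. by rewrite /ev subKr E_anti. Qed.
Lemma ev_gD g w s t : ev g (g + w) s t = - ev g (- w) s t.
Proof. by rewrite -(opprK w) ev_gB opprK. Qed.

Lemma D3I l g r z s t : D3v l z r (g - (z + r)) s t =
  l * ((f r (g - (z + r)))%:~R * ev g z s t + (f (g - (z + r)) z)%:~R * ev g r s t
       - (f z r)%:~R * ev g (z + r) s t).
Proof.
rewrite (D3_ev _ _ _ _ g); last by rewrite addrC subrK.
rewrite ev_gB; ring.
Qed.
Lemma D3II l g r z s t : D3v l (- (z + r)) r (g + z) s t =
  l * ((f r (g + z))%:~R * ev g (- (z + r)) s t + (f (g + z) (- (z + r)))%:~R * ev g r s t
       - (f (- (z + r)) r)%:~R * ev g (- z) s t).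
Proof.
rewrite (D3_ev _ _ _ _ g); last by rewrite opprD subrK addrCA addNr addr0.
rewrite ev_gD; ring.
Qed.
Lemma D3N l g z s t : D3v l z (- z) g s t =
  l * ((f (- z) g)%:~R * ev g z s t + (f g z)%:~R * ev g (- z) s t).
Proof.
rewrite (D3_ev _ _ _ _ g); last by rewrite addrN add0r.
rewrite fNr fxx oppr0; ring.
Qed.

Ltac fexp := rewrite ?(fDl, fDr, fNl, fNr) ?fxx.

Definition sgA (mu : rat) (g r x : H) : seq (fsum H * fsum H * fsum H) :=
  let A : rat := (f x g)%:~R in let B : rat := (f r g)%:~R in let C : rat := (f x r)%:~R in
  [:: tri (mu*(C-B)/B^+2) x r (g - (x+r)); tri (mu*C/B^+2) (-(x+r)) r (g + x);
      tri (mu*C*(B-C)/(B^+2*(A+B))) (x+r) (-(x+r)) g; tri (mu*C*C/(B^+2*A)) x (-x) g].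

Lemma sgA_w2 mu g r x s t : f r g != 0 -> f x g != 0 -> f x g + f r g != 0 ->
  w2 (d3s f (sgA mu g r x)) s t =
  mu * ((f x g)%:~R / (f r g)%:~R * ev g r s t - ev g x s t).
Proof.
move=> hb ha hab.
rewrite /sgA !w2_d3s_cons w2_d3s_nil D3I D3II !D3N.
fexp. rewrite ?(fC x r) ?(fC x g) ?(fC r g) ?fxx.
rewrite ?(intrD, intrN).
have hB : (f r g)%:~R != 0 :> rat by rewrite intr_eq0.
have hA : (f x g)%:~R != 0 :> rat by rewrite intr_eq0.
have hAB : (f x g)%:~R + (f r g)%:~R != 0 :> rat by rewrite -intrD intr_eq0.
field; rewrite ?hB ?hA ?hAB //.
Qed.

Definition sgB (mu : rat) (g r x : H) : seq (fsum H * fsum H * fsum H) :=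
  let A : rat := (f x g)%:~R in let B : rat := (f r g)%:~R in let C : rat := (f x r)%:~R in
  let l1 := mu * (B + C) / B^+2 in
  [:: tri l1 (- ((x - r) + r)) r (g + (x - r));
      tri (l1 * (B - C) / A) x (- x) g;
      tri (l1 * C / (A - B)) (x - r) (- (x - r)) g;
      tri (mu * C / B^+2) (x - r) r (g - ((x - r) + r))].

Lemma sgB_w2 mu g r x s t : f r g != 0 -> f x g != 0 -> f x g - f r g != 0 ->
  w2 (d3s f (sgB mu g r x)) s t =
  mu * ((f x g)%:~R / (f r g)%:~R * ev g r s t - ev g x s t).
Proof.
move=> hb ha hab.
rewrite /sgB !w2_d3s_cons w2_d3s_nil D3I D3II !D3N !subrK.
fexp. rewrite ?(fC x r) ?(fC x g) ?(fC r g) ?fxx.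
rewrite ?(intrD, intrN).
have hB : (f r g)%:~R != 0 :> rat by rewrite intr_eq0.
have hA : (f x g)%:~R != 0 :> rat by rewrite intr_eq0.
have hAB : (f x g)%:~R - (f r g)%:~R != 0 :> rat by rewrite -intrN -intrD intr_eq0.
field; rewrite ?hB ?hA ?hAB //.
Qed.

Definition sgC (mu : rat) (g r x : H) : seq (fsum H * fsum H * fsum H) :=
  let B : rat := (f r g)%:~R in let C : rat := (f x r)%:~R in
  let k := mu * C / B^+3 in let k2 := - mu * (B + C) / B^+3 in
  [:: tri (- mu / B) x r (g - (x + r));
      tri (- mu / B) (x - r) r (g - ((x - r) + r));
      tri (k * (C - B)) (x + r) r (g - ((x + r) + r));
      tri (k * C) (- ((x + r) + r)) r (g + (x + r));
      tri (k * C * (B - C) / (B + B)) ((x + r) + r) (- ((x + r) + r)) g;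
      tri (k * C * C / B) (x + r) (- (x + r)) g;
      tri (k2 * (B + C)) (- ((x - r - r) + r)) r (g + (x - r - r));
      tri (k2 * (B + C) * (B - C) / (- B)) (x - r) (- (x - r)) g;
      tri (k2 * (B + C) * C / (- (B + B))) (x - r - r) (- (x - r - r)) g;
      tri (k2 * C) (x - r - r) r (g - ((x - r - r) + r))].

Lemma sgC_w2 mu g r x s t : f r g != 0 -> f x g = 0 ->
  w2 (d3s f (sgC mu g r x)) s t =
  mu * ((f x g)%:~R / (f r g)%:~R * ev g r s t - ev g x s t).
Proof.
move=> hb ha.
rewrite /sgC !w2_d3s_cons w2_d3s_nil !D3I !D3II !D3N !subrK.
fexp. rewrite ?(fC x r) ?(fC x g) ?(fC r g) ?fxx ha.
rewrite ?(intrD, intrN).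
have hB : (f r g)%:~R != 0 :> rat by rewrite intr_eq0.
have hBB : (f r g)%:~R + (f r g)%:~R != 0 :> rat.
  by rewrite -mulr2n -mulr_natl mulf_eq0 negb_or hB andbT.
field; rewrite ?hB ?hBB //.
Qed.

Definition sg mu g r x :=
  if f x g == 0 then sgC mu g r x
  else if f x g + f r g != 0 then sgA mu g r x else sgB mu g r x.

Lemma sg_w2 mu g r x s t : f r g != 0 ->
  w2 (d3s f (sg mu g r x)) s t =
  mu * ((f x g)%:~R / (f r g)%:~R * ev g r s t - ev g x s t).
Proof.
move=> hb; rewrite /sg; case: eqP => [ha|/eqP ha]; first exact: sgC_w2.
case: ifP => hab; first exact: sgA_w2.
apply: sgB_w2 => //; move/negbFE: hab; lia.
Qed.

Definition goodT (t : fsum H * fsum H * fsum H) :=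
  [/\ in_QH1 f t.1.1, in_QH1 f t.1.2 & in_QH1 f t.2].

Lemma QH1_1 l z : ~ in_kermu f z -> in_QH1 f [:: (l, z)].
Proof.
move=> hz w hw; rewrite coef_cons coef_nil addr0 /dl.
by case: eqP => [e|_]; [case: hz; rewrite e | rewrite mulr0].
Qed.
Lemma triG l a b c : ~ in_kermu f a -> ~ in_kermu f b -> ~ in_kermu f c ->
  goodT (tri l a b c).
Proof. by move=> ha hb hc; split; apply: QH1_1. Qed.
Lemma nk z w : f z w != 0 -> ~ in_kermu f z.
Proof. by move=> h hz; move: h; rewrite hz. Qed.
Lemma all_good (l : seq (fsum H * fsum H * fsum H)) :
  foldr (fun t P => goodT t /\ P) True l -> forall u, u \in l -> goodT u.
Proof.
elim: l => [//|t l IH] /= [ht hl] u; rewrite inE => /orP [/eqP -> //|]; exact: IH.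
Qed.

Ltac nkg g := apply: (nk _ g); fexp; rewrite ?(fC _ g) ?fxx; lia.

Lemma sg_good mu g r x : f r g != 0 -> ~ in_kermu f x -> ~ in_kermu f (g - x) ->
  forall u, u \in sg mu g r x -> goodT u.
Proof.
move=> hb hx hy.
have hg : ~ in_kermu f g by apply: (nk _ r); rewrite fC; move: hb; lia.
rewrite /sg; case: eqP => [ha|/eqP ha].
  rewrite /sgC; apply: all_good => /=; repeat split; apply: QH1_1;
  rewrite ?subrK //; nkg g.
case: ifP => hab.
  rewrite /sgA; apply: all_good => /=; repeat split; apply: QH1_1;
  rewrite ?subrK //; nkg g.
move/negbFE: hab => hab.
rewrite /sgB; apply: all_good => /=; repeat split; apply: QH1_1;
rewrite ?subrK //; nkg g.
Qed.

Definition rg (g : H) : H := epsilon (inhabits 0) (fun r => f r g != 0).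
Definition Qv (g s t : H) : rat := ev g (rg g) s t / (f (rg g) g)%:~R.

Lemma rgP g : ~ in_kermu f g -> f (rg g) g != 0.
Proof.
move=> hg; apply: (epsilon_spec (inhabits 0) (fun r => f r g != 0)).
case: (not_all_ex_not _ _ hg) => y hy; exists y; rewrite fC oppr_eq0; exact/eqP.
Qed.

Definition zbr (p : fsum H * fsum H) := forall q, q \in br f p.1 p.2 -> q.1 = 0.

Definition lift (l : rat) (x y : H) : fsum H * fsum H :=
  ([:: (- (l / 2), x); (- (l / 2), y); (l / 2, x + y)], [:: (1 + 1, x); (-1, x + x)]).

Lemma bil0 (A : zmodType) (b : rat -> H -> A) :
  (forall a a' x, b (a + a') x = b a x + b a' x) -> forall x, b 0 x = 0.
Proof.
move=> h x; have := h 0 0 x; rewrite addr0 => /eqP; rewrite -subr_eq subrr eq_sym => /eqP //.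
Qed.
Lemma bilN (A : zmodType) (b : rat -> H -> A) :
  (forall a a' x, b (a + a') x = b a x + b a' x) -> forall a x, b (- a) x = - b a x.
Proof.
move=> h a x; apply/eqP; rewrite -addr_eq0 -h addNr; exact/eqP/(bil0 _ _ h).
Qed.

Lemma lift_gK l x y : in_gK (lift l x y).1 /\ in_gK (lift l x y).2.
Proof.
split=> A b h1 h2; rewrite /= !big_cons big_nil.
  by rewrite h2 !(bilN _ _ h1) addr0 addrA addrACA !addNr addr0.
by rewrite h1 h2 !(bilN _ _ h1) addr0 addrACA !subrr addr0.
Qed.

Lemma zbr_lift l x y : in_kermu f (x + y) -> zbr (lift l x y).
Proof.
move=> hk q; rewrite /br /= !inE.
have fyx : f y x = 0.
  by have := hk x; rewrite fDl fxx add0r.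
have fxy : f x y = 0 by rewrite fC fyx oppr0.
rewrite !hk !fDr !fxx ?fyx ?fxy !addr0 !mulr0.
by do ![case/orP=> [/eqP -> //|]]; move/eqP=> ->.
Qed.

Lemma dl0 z w : in_kermu f z -> ~ in_kermu f w -> dl z w = 0.
Proof. by move=> hz hw; rewrite /dl; case: eqP => // e; case: hw; rewrite -e. Qed.

Definition TermOK (c1 : seq (fsum H * fsum H)) ts1 (l : rat) (x y : H) :=
  [/\ (forall p, p \in c1 -> in_gK p.1 /\ in_gK p.2), (forall p, p \in c1 -> zbr p),
      (forall u, u \in ts1 -> goodT u) &
      forall s t, ~ in_kermu f s -> ~ in_kermu f t ->
        w2 c1 s t - l * E x y s t = w2 (d3s f ts1) s t - l * (f x y)%:~R * Qv (x + y) s t].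

Lemma term_ok l x y : exists c1 ts1, TermOK c1 ts1 l x y.
Proof.
case: (classic (in_kermu f x \/ in_kermu f y)) => [hxy|hxy].
  exists [::], [::]; split => // s t hs ht; rewrite ?w2_d3s_nil ?w2_nil.
  have -> : f x y = 0 by case: hxy => h; [exact: h | by rewrite fC h oppr0].
  have -> : E x y s t = 0.
    by case: hxy => h; rewrite /E (dl0 _ _ h hs) (dl0 _ _ h ht); ring.
  by rewrite mulr0z !mulr0 mul0r.
move: hxy => /not_or_and [hx hy].
case: (classic (in_kermu f (x + y))) => hk.
  pose g1 := x + (x + x); pose g2 := y + (x + x).
  have hg1 : ~ in_kermu f g1.
    move=> h; apply: hx => w; have := h w; rewrite /g1 !fDl; lia.
  have hg2 : ~ in_kermu f g2.
    move=> h; apply: hx => w; have := h w; have := hk w; rewrite /g2 !fDl; lia.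
  have hxx : ~ in_kermu f (x + x).
    move=> h; apply: hx => w; have := h w; rewrite !fDl; lia.
  have e1 : g1 - x = x + x by rewrite /g1 addrC addKr.
  have e2 : g2 - y = x + x by rewrite /g2 addrC addKr.
  have fyx : f y x = 0 by have := hk x; rewrite fDl fxx add0r.
  have fxy : f x y = 0 by rewrite fC fyx oppr0.
  exists [:: lift l x y], (sg (- (l / 2)) g1 (rg g1) x ++ sg (- (l / 2)) g2 (rg g2) y).
  split.
  - by move=> p; rewrite inE => /eqP ->; exact: lift_gK.
  - by move=> p; rewrite inE => /eqP ->; exact: zbr_lift.
  - move=> u; rewrite mem_cat => /orP [] hu.
      by apply: (sg_good _ _ _ _ (rgP _ hg1) hx _ u hu); rewrite e1.
    by apply: (sg_good _ _ _ _ (rgP _ hg2) hy _ u hu); rewrite e2.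
  - move=> s t hs ht.
    rewrite d3s_cat w2_cat !sg_w2 ?rgP // /ev e1 e2 fxy.
    have -> : f x g1 = 0 by rewrite /g1 !fDr !fxx !addr0.
    have -> : f y g2 = 0 by rewrite /g2 !fDr !fxx fyx !addr0.
    rewrite w2_cons w2_nil /= !coef_cons !coef_nil (dl0 _ _ hk hs) (dl0 _ _ hk ht) /E.
    by rewrite mulr0z mul0r; field; rewrite ?intr_eq0 ?rgP.
have e : x + y - x = y by rewrite addrC addKr.
exists [::], (sg l (x + y) (rg (x + y)) x); split => //.
  by move=> u hu; apply: (sg_good _ _ _ _ (rgP _ hk) hx _ u hu); rewrite e.
move=> s t hs ht; rewrite w2_nil sg_w2 ?rgP // /ev e /Qv /ev.
have -> : f x (x + y) = f x y by rewrite fDr fxx add0r.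
ring.
Qed.

Lemma build (T : seq (rat * H * H)) : exists c' ts,
  [/\ (forall p, p \in c' -> in_gK p.1 /\ in_gK p.2), (forall p, p \in c' -> zbr p),
      (forall u, u \in ts -> goodT u) &
      forall s t, ~ in_kermu f s -> ~ in_kermu f t ->
        w2 c' s t - \sum_(k <- T) k.1.1 * E k.1.2 k.2 s t =
        w2 (d3s f ts) s t - \sum_(k <- T) k.1.1 * (f k.1.2 k.2)%:~R * Qv (k.1.2 + k.2) s t].
Proof.
elim: T => [|[[l x] y] T IH].
  exists [::], [::]; split => // s t _ _.
  by rewrite !big_nil ?w2_d3s_nil ?w2_nil.
case: (term_ok l x y) => c1 [ts1 [h1 h2 h3 h4]].
case: IH => c2 [ts2 [g1 g2 g3 g4]].
exists (c1 ++ c2), (ts1 ++ ts2); split.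
- by move=> p; rewrite mem_cat => /orP [] hp; [exact: h1 | exact: g1].
- by move=> p; rewrite mem_cat => /orP [] hp; [exact: h2 | exact: g2].
- by move=> p; rewrite mem_cat => /orP [] hp; [exact: h3 | exact: g3].
move=> s t hs ht; rewrite w2_cat d3s_cat w2_cat !big_cons /=.
have := h4 s t hs ht; have := g4 s t hs ht; lra.
Qed.

Definition Tc (c : seq (fsum H * fsum H)) : seq (rat * H * H) :=
  flatten [seq [seq (a.1 * b.1, a.2, b.2) | a <- p.1, b <- p.2] | p <- c].

Lemma coefE (u : fsum H) w : coef u w = \sum_(a <- u) a.1 * dl a.2 w.
Proof.
elim: u => [|a u IH]; first by rewrite coef_nil big_nil.
by case: a => l z; rewrite coef_cons big_cons IH.
Qed.

Lemma w2_T c s t : w2 c s t = \sum_(k <- Tc c) k.1.1 * E k.1.2 k.2 s t.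
Proof.
rewrite /w2 /Tc big_flatten big_map; apply: eq_bigr => p _.
rewrite big_flatten big_map.
under eq_bigr => a _ do rewrite big_map.
rewrite !coefE !big_distrlr -sumrB; apply: eq_bigr => a _ /=.
rewrite -sumrB; apply: eq_bigr => b _ /=; rewrite /E; ring.
Qed.

Lemma coef_T c z : coef (flatten [seq br f p.1 p.2 | p <- c]) z =
  \sum_(k <- Tc c) k.1.1 * (f k.1.2 k.2)%:~R * dl (k.1.2 + k.2) z.
Proof.
rewrite coefE /Tc !big_flatten !big_map; apply: eq_bigr => p _.
rewrite /br !big_flatten !big_map; apply: eq_bigr => a _.
by rewrite !big_map; apply: eq_bigr => b _.
Qed.

Lemma Qv_deg g s t : Qv g s t = (g == s + t)%:R * Qv (s + t) s t.
Proof.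
case: eqP => [-> | ne]; first by rewrite mul1r.
rewrite mul0r /Qv /ev /E /dl.
set r := rg g.
have h1 : (r == s) && (g - r == t) = false.
  apply/negP => /andP [/eqP rs /eqP gt]; apply: ne.
  by rewrite -rs -gt addrC subrK.
have h2 : (r == t) && (g - r == s) = false.
  apply/negP => /andP [/eqP rt /eqP gs]; apply: ne.
  by rewrite -rt -gs subrK.
move: h1 h2.
by case: (r == s); case: (g - r == t); case: (r == t); case: (g - r == s) => //= _ _;
  rewrite ?(mul0r, mulr0, mulr1, mul1r, subrr, subr0).
Qed.

Lemma Qsum_zero c s t : is_cycle f c ->
  \sum_(k <- Tc c) k.1.1 * (f k.1.2 k.2)%:~R * Qv (k.1.2 + k.2) s t = 0.
Proof.
move=> hc; have := hc (s + t); rewrite coef_T => hz.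
transitivity (\sum_(k <- Tc c) k.1.1 * (f k.1.2 k.2)%:~R * dl (k.1.2 + k.2) (s + t)
                 * Qv (s + t) s t).
  by apply: eq_bigr => k _; rewrite Qv_deg /dl mulrA.
by rewrite -mulr_suml hz mul0r.
Qed.
End S.

Theorem theorem5p1 (H : zmodType) (f : H -> H -> int) :
  alt_bilinear f ->
  (exists x y, f x y != 0) ->
  forall c : seq (fsum H * fsum H),
    (forall p, p \in c -> in_QH1 f p.1 /\ in_QH1 f p.2) ->
    is_cycle f c ->
    exists c' : seq (fsum H * fsum H),
      [/\ (forall p, p \in c' -> in_gK p.1 /\ in_gK p.2),
          is_cycle f c' &
          exists ts : seq (fsum H * fsum H * fsum H),
            (forall t, t \in ts ->
               [/\ in_QH1 f t.1.1, in_QH1 f t.1.2 & in_QH1 f t.2]) /\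
            (forall s t, ~ in_kermu f s -> ~ in_kermu f t ->
               w2 c' s t - w2 c s t = w2 (d3s f ts) s t)].
Proof.
move=> hf _ c _ hc.
case: (@build H f hf (@Tc H c)) => c' [ts [h1 h2 h3 h4]].
exists c'; split => //.
  move=> z; rewrite coefE big1_seq // => q /andP [_ hq].
  move/flattenP: hq => [r /mapP [p hp ->] hq].
  by rewrite (h2 p hp q hq) mul0r.
exists ts; split; first exact: h3.
move=> s t hs ht; by rewrite (w2_T _ c) h4 // Qsum_zero // subr0.
Qed.
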